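(* Let $X=\{1,\dots,n\}$, $Y$ finite, $Q$ a symmetric irreducible stochastic matrix on $Y$ (notation in context). Let $1\le k\le n-1$, let $\underline a=(a_0,\dots,a_m)$ be a type with $a_0+\cdots+a_m=k+1$ and $a_0\ge1$, $\underline a'=(a_0-1,a_1,\dots,a_m)$, $A\subseteq X$ with $|A|=k$, and $F\in P_{k,\underline a',A}$. Then $$D_{k+1,\underline a}D^*_{k+1,\underline a}F=|Y|(n-k)\,F+Q_kF.$$
   Context: $Q$ acts on $L(Y)$ by $(Qf)(y)=\sum_{y'}q(y,y')f(y')$, with distinct eigenvalues $\lambda_0=1,\dots,\lambda_m$ and eigenspaces $W_0$ (constants), $W_1,\dots,W_m$; $\sum_yf(y)=0$ for $f\in W_j$, $j\ge1$. $\Theta_k$: functions $\theta$ with $\mathrm{dom}(\theta)$ a $k$-subset of $X$ and values in $Y$; $\varphi\subseteq\theta$ means $\mathrm{dom}\varphi\subseteq\mathrm{dom}\theta$ and $\theta|_{\mathrm{dom}\varphi}=\varphi$. $D_k:L(\Theta_k)\to L(\Theta_{k-1})$, $(D_kF)(\varphi)=\sum_{\theta\supseteq\varphi}F(\theta)$; $D_k^*:L(\Theta_{k-1})\to L(\Theta_k)$, $(D_k^*F)(\theta)=\sum_{\varphi\subseteq\theta}F(\varphi)$. Types $\underline a=(a_0,\dots,a_m)$, $\ell(\underline a)=a_1+\cdots+a_m$. A fundamental function of type $\underline b$ on a $k$-set $A$ is $F=\bigotimes_{j\in A}F^j$ ($F(\theta)=\prod_{j\in A}F^j(\theta(j))$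 on $Y^A$, $0$ elsewhere) with each $F^j$ in some $W_{i_j}$ and exactly $b_i$ indices $j$ with $i_j=i$; $P_{k,\underline b,A}$ is their span and $P_{k,\underline b}=\bigoplus_AP_{k,\underline b,A}$. $D_{k+1,\underline a}$ is $D_{k+1}$ restricted to $P_{k+1,\underline a}$ and $D^*_{k+1,\underline a}$ is $D^*_{k+1}$ restricted to $P_{k,\underline a'}$. The operator $Q_k$ on $L(\Theta_k)$ is defined on a fundamental function $F=\bigotimes_{j\in A}F^j$ and extended linearly: for $\theta\in\Theta_k$ with $|\mathrm{dom}\theta\cap A|=k-1$, $A\setminus\mathrm{dom}\theta=\{i\}$, $\mathrm{dom}\theta\setminus A=\{i_0\}$, $(Q_kF)(\theta)=|Y|F(\bar\theta)$ if $F^i\in W_0$ and $0$ if $F^i\notin W_0$, where $\bar\theta\in Y^A$ agrees with $\theta$ on $A\setminus\{i\}$ and $\bar\theta(i)=\theta(i_0)$; for all other $\theta$, $(Q_kF)(\theta)=0$. *)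

(* Defs.v *)
From HB Require Import structures.
From mathcomp Require Import all_boot all_order all_algebra.
Set Implicit Arguments. Unset Strict Implicit. Unset Printing Implicit Defensive.
Import Order.TTheory GRing.Theory Num.Theory.
Local Open Scope ring_scope.

Section Defs.
Variable R : realFieldType.
Variable Y : finType.

Definition Qop (q : Y -> Y -> R) (f : Y -> R) (y : Y) : R :=
  \sum_(y' : Y) q y y' * f y'.

Fixpoint qpow (q : Y -> Y -> R) (t : nat) (x y : Y) : R :=
  match t with
  | 0%N => (x == y)%:R
  | t'.+1 => \sum_(z : Y) qpow q t' x z * q z y
  end.

Definition irreducible_mat (q : Y -> Y -> R) : Prop :=
  forall x y : Y, exists t : nat, 0 < qpow q t x y.

Definition in_eigenspace (q : Y -> Y -> R) (mu : R) (f : Y -> R) : Prop :=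
  forall y, Qop q f y = mu * f y.

(* boolean version (used for the test "F^i in W_0", with lambda_0 = 1) *)
Definition in_W0b (q : Y -> Y -> R) (f : Y -> R) : bool :=
  [forall y, Qop q f y == f y].

Variable n : nat.
(* X = 'I_n.  A partial function theta : X -> Y is encoded as a total function
   X -> option Y; dom theta = the points where it is not None. *)
Definition pfun := {ffun 'I_n -> option Y}.

Definition pdom (th : pfun) : {set 'I_n} := [set x | th x != None].

Definition subpf (ph th : pfun) : bool :=
  [forall x, (ph x != None) ==> (ph x == th x)].

(* D_k : L(Theta_k) -> L(Theta_{k-1}); functions on Theta_j are encoded as
   functions on all partial functions, with value 0 off Theta_j. *)
Definition Dop (k : nat) (F : pfun -> R) (ph : pfun) : R :=
  if #|pdom ph| == k.-1 then
    \sum_(th : pfun | (#|pdom th| == k) && subpf ph th) F th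
  else 0.

Definition Dsop (k : nat) (F : pfun -> R) (th : pfun) : R :=
  if #|pdom th| == k then
    \sum_(ph : pfun | (#|pdom ph| == k.-1) && subpf ph th) F ph
  else 0.

Definition evalY (f : Y -> R) (o : option Y) : R :=
  match o with Some y => f y | None => 0 end.

Definition fundF (A : {set 'I_n}) (Fj : 'I_n -> Y -> R) (th : pfun) : R :=
  if pdom th == A then \prod_(j in A) evalY (Fj j) (th j) else 0.

(* Data of a fundamental function of type b on A: each F^j (j in A) lies in
   W_{idx j} (eigenspace of lam (idx j)), and exactly b i indices j in A have
   idx j = i. *)
Definition fund_data (q : Y -> Y -> R) (m : nat) (lam : 'I_m.+1 -> R)
    (b : 'I_m.+1 -> nat) (A : {set 'I_n})
    (idx : 'I_n -> 'I_m.+1) (Fj : 'I_n -> Y -> R) : Prop :=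
  (forall j, j \in A -> in_eigenspace q (lam (idx j)) (Fj j)) /\
  (forall i, #|[set j in A | idx j == i]| = b i).

(* Q_k on the fundamental function (x)_{j in A} F^j, as in the paper:
   for theta in Theta_k with |dom theta :&: A| = k-1, A \ dom theta = {i},
   dom theta \ A = {i0}: value |Y| F(bar theta) if F^i in W_0, else 0,
   where bar theta agrees with theta on A\{i} and bar theta(i) = theta(i0);
   0 for all other theta.  (The sums over i, i0 range over singletons.) *)
Definition Qfund (q : Y -> Y -> R) (k : nat) (A : {set 'I_n})
    (Fj : 'I_n -> Y -> R) (th : pfun) : R :=
  if (#|pdom th| == k) && (#|pdom th :&: A| == k.-1) then
    \sum_(i in A :\: pdom th) \sum_(i0 in pdom th :\: A)
      (if in_W0b q (Fj i) then
         #|Y|%:R * \prod_(j in A) evalY (Fj j) (if j == i then th i0 else th j)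
       else 0)
  else 0.

End Defs.

Definition type_prime (m : nat) (a : 'I_m.+1 -> nat) (i : 'I_m.+1) : nat :=
  if i == ord0 then (a i).-1 else a i.

(* Main.v *)
Require Import Defs.
From HB Require Import structures.
From mathcomp Require Import all_boot all_order all_algebra zify.
Set Implicit Arguments. Unset Strict Implicit. Unset Printing Implicit Defensive.
Import Order.TTheory GRing.Theory Num.Theory.
Local Open Scope ring_scope.

Definition upd (Y : finType) (n : nat) (th : pfun Y n) (x : 'I_n) (y : Y) : pfun Y n :=
  [ffun j => if j == x then Some y else th j].
Definition rem (Y : finType) (n : nat) (th : pfun Y n) (z : 'I_n) : pfun Y n :=
  [ffun j => if j == z then None else th j].

Lemma pdom_upd (Y : finType) (n : nat) (th : pfun Y n) x y :
  pdom (upd th x y) = x |: pdom th.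
Proof. apply/setP => j. rewrite /pdom !inE ffunE. by case: (j =P x). Qed.

Lemma pdom_rem (Y : finType) (n : nat) (th : pfun Y n) z :
  pdom (rem th z) = pdom th :\ z.
Proof. apply/setP => j. rewrite /pdom !inE ffunE. by case: (j =P z). Qed.

Lemma subpf_dom (Y : finType) (n : nat) (ph th : pfun Y n) :
  subpf ph th -> pdom ph \subset pdom th.
Proof.
move=> /forallP H; apply/subsetP => j; rewrite /pdom !inE => Hj.
by have := H j; rewrite Hj /= => /eqP <-.
Qed.

Lemma subpfE (Y : finType) (n : nat) (ph th : pfun Y n) j :
  subpf ph th -> ph j != None -> th j = ph j.
Proof. by move=> /forallP H Hj; have := H j; rewrite Hj /= => /eqP <-. Qed.

Lemma card_diff1 (T : finType) (B C : {set T}) :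
  B \subset C -> #|C| = #|B|.+1 -> exists x, C :\: B = [set x].
Proof.
move=> Hs Hc; apply/cards1P; rewrite cardsD (setIidPr Hs) Hc subSnn //.
Qed.

Lemma sum_ext (R : realFieldType) (Y : finType) (n : nat) (th : pfun Y n) (f : pfun Y n -> R) :
  \sum_(th' | (#|pdom th'| == (#|pdom th|).+1) && subpf th th') f th' =
  \sum_(x in ~: pdom th) \sum_(y : Y) f (upd th x y).
Proof.
rewrite pair_big_dep /=.
rewrite (eq_bigl (fun p => p \in [set p : 'I_n * Y | p.1 \in ~: pdom th])); last first.
  by move=> p; rewrite inE andbT.
rewrite -(big_imset f (h := fun p : 'I_n * Y => upd th p.1 p.2)) /=.
  apply: eq_bigl => th'; apply/idP/idP.
    move=> /andP [/eqP Hc Hs].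
    have [x Hx] := card_diff1 (subpf_dom Hs) Hc.
    have Hxin : x \in pdom th' :\: pdom th by rewrite Hx set11.
    move: (Hxin); rewrite /pdom !inE => /andP [Hxn Hxd].
    case Ex : (th' x) Hxd => [y|] // _.
    apply/imsetP; exists (x, y); first by rewrite !inE.
    apply/ffunP => j; rewrite /upd ffunE /=; case: (j =P x) => [->//|/eqP Hjx].
    case Hj : (th j != None); first by rewrite (subpfE Hs Hj).
    move/negbFE/eqP: Hj => Hj; rewrite Hj.
    case Ej : (th' j) => [y'|] //.
    have : j \in pdom th' :\: pdom th by rewrite /pdom !inE Ej Hj.
    by rewrite Hx inE (negbTE Hjx).
  move=> /imsetP [[x y]]; rewrite !inE /= => Hx ->.
  rewrite pdom_upd cardsU1 {1}/pdom inE Hx /= eqxx /=.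
  apply/forallP => j; apply/implyP => Hj; rewrite /upd ffunE.
  case: (j =P x) => [Ejx|//]; move: Hx; rewrite -Ejx; by rewrite Hj.
move=> [x y] [x' y']; rewrite !inE /= => Hx Hx' E.
have := congr1 (fun g : pfun Y n => g x) E; rewrite /upd /= !ffunE eqxx.
case: (x =P x') => [<- [->] //|_ ]; move: Hx; rewrite negbK => /eqP -> //.
Qed.

Lemma sum_rem (R : realFieldType) (Y : finType) (n : nat) (th' : pfun Y n) (k : nat)
  (f : pfun Y n -> R) : #|pdom th'| = k.+1 ->
  \sum_(ph | (#|pdom ph| == k) && subpf ph th') f ph =
  \sum_(z in pdom th') f (rem th' z).
Proof.
move=> Hc.
rewrite -(big_imset f (h := rem th')) /=.
  apply: eq_bigl => ph; apply/idP/idP.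
    move=> /andP [/eqP Hp Hs].
    have [z Hz] := card_diff1 (subpf_dom Hs) (etrans Hc (congr1 S (esym Hp))).
    have Hzin : z \in pdom th' :\: pdom ph by rewrite Hz set11.
    move: (Hzin); rewrite inE => /andP [Hzn Hzd].
    apply/imsetP; exists z => //.
    apply/ffunP => j; rewrite /rem ffunE /=; case: (j =P z) => [->|/eqP Hjz].
      by move: Hzn; rewrite /pdom inE negbK => /eqP.
    case Hj : (ph j != None); first by rewrite (subpfE Hs Hj).
    move/negbFE/eqP: Hj => Hj; rewrite Hj.
    case Ej : (th' j) => [y'|] //.
    have : j \in pdom th' :\: pdom ph by rewrite /pdom !inE Ej Hj.
    by rewrite Hz inE (negbTE Hjz).
  move=> /imsetP [z Hz ->].
  have Hk : #|pdom th' :\ z| = k by move: Hc; rewrite (cardsD1 z) Hz => [[]].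
  rewrite pdom_rem Hk eqxx /=.
  apply/forallP => j; apply/implyP; rewrite /rem ffunE.
  by case: (j =P z).
move=> z z' Hz Hz' E.
have := congr1 (fun g : pfun Y n => g z) E; rewrite /rem /= !ffunE eqxx.
case: (z =P z') => [//|_ ]; move: Hz; rewrite /pdom inE => /eqP H /esym //.
Qed.

Lemma set_cond (T : finType) (D A : {set T}) x z :
  x \notin D -> z \in D -> #|A| = #|D| ->
  ((x |: D) :\ z == A) = [&& x \in A, z \notin A & #|D :&: A| == #|D|.-1].
Proof.
move=> Hx Hz HA.
have Hxz : x != z by apply/eqP => E; move: Hx; rewrite E Hz.
have HDz : #|D :\ z| = #|D|.-1 by rewrite (cardsD1 z D) Hz.
apply/eqP/idP.
  move=> <-; rewrite !inE eqxx Hxz /=.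
  have -> : D :&: ((x |: D) :\ z) = D :\ z.
    by apply/setP => j; rewrite !inE; case: (j =P z) => //= _; case: (j \in D); rewrite /= ?orbT.
  by rewrite HDz eqxx /= eqxx.
move=> /and3P [HxA HzA /eqP Hc].
have HDA : D :&: A = D :\ z.
  apply/eqP; rewrite eqEcard Hc HDz leqnn andbT.
  apply/subsetP => j; rewrite !inE => /andP [Hj HjA]; rewrite Hj andbT.
  by apply/eqP => E; move: HzA; rewrite -E HjA.
apply/eqP; rewrite eqEcard; apply/andP; split.
  apply/subsetP => j; rewrite !inE => /andP [Hjz /orP [/eqP ->//|Hj]].
  have : j \in D :&: A by rewrite HDA !inE Hjz Hj.
  by rewrite inE => /andP [].
have -> : (x |: D) :\ z = x |: (D :\ z).
  apply/setP => j; rewrite !inE; case: (j =P x) => [->|]; rewrite ?Hxz //.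
rewrite cardsU1 HDz !inE negb_and Hx orbT HA.
by case: #|D|.
Qed.

Lemma term_eq (R : realFieldType) (Y : finType) (n : nat) (q : Y -> Y -> R)
  (A : {set 'I_n}) (Fj : 'I_n -> Y -> R) (th : pfun Y n) x z
  (HK : forall j, j \in A -> forall y0, \sum_(y : Y) Fj j y =
        if in_W0b q (Fj j) then #|Y|%:R * Fj j y0 else 0) :
  x \in A -> z \notin A -> th z != None ->
  \sum_(y : Y) \prod_(j in A) evalY (Fj j) (rem (upd th x y) z j) =
  (if in_W0b q (Fj x) then
     #|Y|%:R * \prod_(j in A) evalY (Fj j) (if j == x then th z else th j)
   else 0).
Proof.
move=> HxA HzA Hz.
have Hxz : (x == z) = false by apply/negbTE; apply/eqP => E; move: HzA; rewrite -E HxA.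
pose P := \prod_(j in A | j != x) evalY (Fj j) (th j).
transitivity (\sum_(y : Y) (Fj x y * P)).
  apply: eq_bigr => y _; rewrite (bigD1 x HxA) /= /rem /upd !ffunE Hxz eqxx /=.
  congr (_ * _); apply: eq_bigr => j /andP [Hj Hjx]; rewrite !ffunE (negbTE Hjx).
  by have -> : (j == z) = false by apply/negbTE; apply: contraNneq HzA => <-.
case Ez : (th z) Hz => [y0|] // _.
rewrite -mulr_suml (HK x HxA y0) (bigD1 x HxA) /= eqxx /=.
rewrite (eq_bigr (fun j => evalY (Fj j) (th j))); last first.
  by move=> j /andP [_ Hjx]; rewrite (negbTE Hjx).
by rewrite /P; case: ifP => _; rewrite ?mul0r // mulrA.
Qed.

Lemma core (R : realFieldType) (Y : finType) (n : nat) (q : Y -> Y -> R)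
  (k : nat) (A : {set 'I_n}) (HA : #|A| = k) (Fj : 'I_n -> Y -> R)
  (HK : forall j, j \in A -> forall y0, \sum_(y : Y) Fj j y =
        if in_W0b q (Fj j) then #|Y|%:R * Fj j y0 else 0) (th : pfun Y n) :
  Dop k.+1 (Dsop k.+1 (fundF A Fj)) th =
  #|Y|%:R * (n - k)%:R * fundF A Fj th + Qfund q k A Fj th.
Proof.
rewrite /Dop /=.
have [HD|HD] := eqVneq #|pdom th| k; last first.
  have HA' : (pdom th == A) = false.
    by apply/negbTE; apply: contraNneq HD => ->; rewrite HA.
  by rewrite /fundF /Qfund HA' (negbTE HD) /= mulr0 add0r.
rewrite ?HD ?eqxx.
set G := fundF A Fj.
rewrite (eq_bigr (fun th' => \sum_(ph | (#|pdom ph| == k) && subpf ph th') G ph)); last first.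
  by move=> th' /andP [/eqP H _]; rewrite /Dsop H eqxx.
have E := sum_ext th (fun th' => \sum_(ph | (#|pdom ph| == k) && subpf ph th') G ph).
rewrite HD in E; rewrite E {E}.
transitivity (\sum_(x in ~: pdom th) \sum_(y : Y)
   (G th + \sum_(z in pdom th) G (rem (upd th x y) z))).
  apply: eq_bigr => x Hx; apply: eq_bigr => y _.
  have Hx' : x \notin pdom th by rewrite inE in Hx.
  rewrite sum_rem; last by rewrite pdom_upd cardsU1 Hx' HD.
  rewrite pdom_upd big_setU1 //=; congr (G _ + _).
  apply/ffunP => j; rewrite /rem /upd !ffunE.
  case: (j =P x) => [->|//]; by move: Hx'; rewrite /pdom inE negbK => /eqP ->.
under eq_bigr do rewrite big_split.
rewrite big_split /=; congr (_ + _).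
  rewrite (eq_bigr (fun _ => G th *+ #|Y|)); last by move=> x _; rewrite sumr_const.
  rewrite sumr_const.
  have -> : #|~: pdom th| = (n - k)%N.
    have Hc := cardsC (pdom th); rewrite HD in Hc; have Hc' : (k + #|~: pdom th| = n)%N by rewrite Hc; exact: card_ord. by move/(congr1 (subn^~ k)): Hc'; rewrite addKn.
  by rewrite -mulrnA -[LHS]mulr_natl natrM.
under eq_bigr do rewrite exchange_big.
rewrite /Qfund HD eqxx /=.
have [HI|HI] := eqVneq #|pdom th :&: A| k.-1; last first.
  apply: big1 => x Hx; apply: big1 => z Hz; apply: big1 => y _.
  have Hx' : x \notin pdom th by rewrite inE in Hx.
  rewrite /G /fundF pdom_rem pdom_upd set_cond // ?HD ?HA //.
  by rewrite (negbTE HI) !andbF.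
rewrite ?HI ?eqxx.
transitivity (\sum_(x in ~: pdom th) \sum_(z in pdom th)
  (if (x \in A) && (z \notin A) then
    (if in_W0b q (Fj x) then
     #|Y|%:R * \prod_(j in A) evalY (Fj j) (if j == x then th z else th j)
     else 0) else 0)).
  apply: eq_bigr => x Hx; apply: eq_bigr => z Hz.
  have Hx' : x \notin pdom th by rewrite inE in Hx.
  rewrite /G /fundF.
  under eq_bigr do rewrite pdom_rem pdom_upd.
  rewrite set_cond // ?HD ?HA // HI eqxx andbT.
  case: ifP => [/andP [HxA HzA]|_]; last by rewrite big1.
  by apply: term_eq => //; move: Hz; rewrite inE.
rewrite big_mkcond [RHS]big_mkcond; apply: eq_bigr => x _.
rewrite !inE; case: (th x != None) => //=.
case: (x \in A) => /=; last by rewrite big1.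
rewrite big_mkcond [RHS]big_mkcond; apply: eq_bigr => z _.
by rewrite !inE; case: (th z != None); case: (z \in A).
Qed.
Lemma qpow_ge0 (R : realFieldType) (Y : finType) (q : Y -> Y -> R)
  (Hnn : forall x y, 0 <= q x y) t x y : 0 <= qpow q t x y.
Proof.
elim: t y => [|t IH] y /=; first by rewrite ler0n.
by apply: sumr_ge0 => z _; apply: mulr_ge0.
Qed.

Lemma fixed_const (R : realFieldType) (Y : finType) (q : Y -> Y -> R)
  (Hnn : forall x y, 0 <= q x y)
  (Hstoch : forall x, \sum_(y : Y) q x y = 1)
  (Hirr : irreducible_mat q) (f : Y -> R) :
  (forall y, Qop q f y = f y) -> forall y y0, f y = f y0.
Proof.
move=> Hf y y0.
have [yM _ HM] := @arg_maxP _ R Y y0 predT f isT.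
have step : forall z w, f z = f yM -> 0 < q z w -> f w = f yM.
  move=> z w Hz Hq.
  have H0 : \sum_(w' : Y) q z w' * (f yM - f w') = 0.
    under eq_bigr do rewrite mulrBr.
    rewrite sumrB -mulr_suml Hstoch mul1r.
    by have := Hf z; rewrite /Qop => ->; rewrite Hz subrr.
  have Hge : forall w', predT w' -> 0 <= q z w' * (f yM - f w').
    move=> w' _; apply: mulr_ge0 => //; rewrite subr_ge0; exact: HM.
  have := psumr_eq0P Hge H0 (isT : predT w).
  move/eqP; rewrite mulf_eq0 subr_eq0 gt_eqF //=.
  by move/eqP ->.
have key : forall t w, 0 < qpow q t yM w -> f w = f yM.
  elim=> [|t IH] w /=.
    by case: eqP => [->|]; rewrite ?ltxx.
  move=> Hpos.
  case: (pickP (fun z => 0 < qpow q t yM z * q z w)) => [z Hz|Hnone].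
    move: Hz => /= Hz.
    have Hq : 0 < q z w.
      rewrite lt_def Hnn andbT; apply/eqP => H0; move: Hz; rewrite H0 mulr0 ltxx //.
    have Hp : 0 < qpow q t yM z.
      rewrite lt_def qpow_ge0 // andbT; apply/eqP => H0; move: Hz; rewrite H0 mul0r ltxx //.
    exact: (step z w (IH z Hp) Hq).
  exfalso; move: Hpos; rewrite big1 ?ltxx // => z _.
  have := Hnone z => /= /negbT; rewrite lt_def negb_and negbK.
  by rewrite mulr_ge0 ?qpow_ge0 // orbF => /eqP.
have [t Ht] := Hirr yM y.
have [t0 Ht0] := Hirr yM y0.
by rewrite (key t y Ht) (key t0 y0 Ht0).
Qed.

Lemma sum_eig (R : realFieldType) (Y : finType) (q : Y -> Y -> R)
  (Hnn : forall x y, 0 <= q x y)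
  (Hstoch : forall x, \sum_(y : Y) q x y = 1)
  (Hsym : forall x y, q x y = q y x)
  (Hirr : irreducible_mat q) (mu : R) (f : Y -> R) :
  in_eigenspace q mu f -> forall y0,
  \sum_(y : Y) f y = if in_W0b q f then #|Y|%:R * f y0 else 0.
Proof.
move=> Hf y0; case: ifP => HW.
  have Hc := fixed_const Hnn Hstoch Hirr (fun y => eqP (forallP HW y)).
  by rewrite (eq_bigr (fun _ => f y0)) ?sumr_const ?mulr_natl ?card_ord // => y _; rewrite Hc.
have Hmu : mu != 1.
  apply/eqP => Hm; move: HW; rewrite /in_W0b; move/negbT/negP; apply.
  by apply/forallP => y; rewrite Hf Hm mul1r.
have HS : \sum_(y : Y) Qop q f y = \sum_(y : Y) f y.
  rewrite /Qop exchange_big /=; apply: eq_bigr => y' _.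
  by rewrite -mulr_suml (eq_bigr (fun y => q y' y)) ?Hstoch ?mul1r // => y _; rewrite Hsym.
move: HS; rewrite (eq_bigr (fun y => mu * f y)) ?(fun y => Hf y) // -mulr_sumr.
move=> /eqP; rewrite -subr_eq0 -{2}(mul1r (\sum_y f y)) -mulrBl mulf_eq0 subr_eq0 (negbTE Hmu) /=.
by move/eqP.
Qed.
Unset Implicit Arguments.
Set Strict Implicit.

Theorem lemma7p5
  (R : realFieldType) (Y : finType) (n : nat) (q : Y -> Y -> R)
  (m : nat) (lam : 'I_m.+1 -> R)
  (* Q is a symmetric irreducible stochastic matrix *)
  (Hnn : forall x y, 0 <= q x y)
  (Hstoch : forall x, \sum_(y : Y) q x y = 1)
  (Hsym : forall x y, q x y = q y x)
  (Hirr : irreducible_mat q)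
  (* lam_0 = 1, ..., lam_m are the distinct eigenvalues of Q *)
  (Hlam0 : lam ord0 = 1)
  (Hlinj : injective lam)
  (Heig : forall i, exists f : Y -> R, (exists y, f y != 0) /\ in_eigenspace q (lam i) f)
  (Hall : forall (mu : R) (f : Y -> R), (exists y, f y != 0) ->
            in_eigenspace q mu f -> exists i, mu = lam i)
  (k : nat) (Hk1 : (1 <= k)%N) (Hk2 : (k <= n - 1)%N)
  (a : 'I_m.+1 -> nat) (Hasum : (\sum_(i < m.+1) a i)%N = k.+1)
  (Ha0 : (1 <= a ord0)%N)
  (A : {set 'I_n}) (HA : #|A| = k)
  (* F in P_{k,a',A}: a linear combination of fundamental functions of type a' on A *)
  (r : nat) (c : 'I_r -> R)
  (idx : 'I_r -> 'I_n -> 'I_m.+1) (Fj : 'I_r -> 'I_n -> Y -> R)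
  (Hfund : forall s, fund_data q lam (type_prime a) A (idx s) (Fj s)) :
  let F := fun th : pfun Y n => \sum_(s < r) c s * fundF A (Fj s) th in
  forall th : pfun Y n,
    Dop k.+1 (Dsop k.+1 F) th =
      #|Y|%:R * (n - k)%:R * F th + \sum_(s < r) c s * Qfund q k A (Fj s) th.
Proof.
move=> F th.
have Hcore : forall s, Dop k.+1 (Dsop k.+1 (fundF A (Fj s))) th =
  #|Y|%:R * (n - k)%:R * fundF A (Fj s) th + Qfund q k A (Fj s) th.
  move=> s; apply: core => // j Hj y0.
  exact: (sum_eig Hnn Hstoch Hsym Hirr ((Hfund s).1 j Hj)).
have HDs : forall th', Dsop k.+1 F th' =
    \sum_(s < r) c s * Dsop k.+1 (fundF A (Fj s)) th'.
  move=> th'; rewrite /Dsop; case: ifP => _; last by rewrite big1 // => s _; rewrite mulr0.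
  by rewrite /F exchange_big; apply: eq_bigr => s _; rewrite mulr_sumr.
have HDo : Dop k.+1 (Dsop k.+1 F) th =
    \sum_(s < r) c s * Dop k.+1 (Dsop k.+1 (fundF A (Fj s))) th.
  rewrite /Dop; case: ifP => _; last by rewrite big1 // => s _; rewrite mulr0.
  rewrite (eq_bigr _ (fun th' _ => HDs th')) exchange_big.
  by apply: eq_bigr => s _; rewrite mulr_sumr.
rewrite HDo /F mulr_sumr -big_split; apply: eq_bigr => s _.
by rewrite Hcore mulrDr mulrCA.
Qed.
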